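(* Let $F=\frac1{16}\begin{pmatrix}1&2&1\\2&4&2\\1&2&1\end{pmatrix}$ (Gaussian blur filter). Then the equation $F*X=B$ with the periodic boundary condition, for unknown $X\in\mathbb{R}^{m\times n}$, has a unique solution for every $B\in\mathbb{R}^{m\times n}$ if and only if $m,n\notin\{2l: l\in\mathbb{N}\}$.
   Context: $\mathbb{N}=\{1,2,3,\dots\}$. For $F=[f_{ij}]\in\mathbb{R}^{3\times3}$ and $X=[x_{ij}]\in\mathbb{R}^{m\times n}$, the convolution $F*X\in\mathbb{R}^{m\times n}$ is defined by $[F*X]_{ij}=\sum_{l_1=1}^3\sum_{l_2=1}^3 f_{l_1l_2}\,x_{i-l_1+2,\,j-l_2+2}$ for $1\le i\le m$, $1\le j\le n$, where the periodic boundary condition sets $x_{0j}=x_{mj}$, $x_{m+1,j}=x_{1j}$, $x_{i0}=x_{in}$, $x_{i,n+1}=x_{i1}$ (for all indices $i\in\{0,\dots,m+1\}$, $j\in\{0,\dots,n+1\}$, so corners are also determined, e.g. $x_{00}=x_{mn}$). *)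

(* Defs.v *)
From HB Require Import structures.
From mathcomp Require Import all_boot all_order all_algebra.
From mathcomp Require Import reals.
Set Implicit Arguments. Unset Strict Implicit. Unset Printing Implicit Defensive.
Import Order.TTheory GRing.Theory Num.Theory.
Local Open Scope ring_scope.

Lemma ord_pos (m : nat) (i : 'I_m) : (0 < m)%N.
Proof. by case: i => k hk; apply: leq_ltn_trans hk. Qed.

(* With 0-based indices i : 'I_m and l : 'I_3 (l = l_1 - 1),
   the paper's index i_1 - l_1 + 2 (1-based, i_1 = i+1) is, 0-based,
   i + 1 - l, taken modulo m: the periodic boundary condition. *)
Definition pshift (m : nat) (i : 'I_m) (l : 'I_3) : 'I_m :=
  Ordinal (ltn_pmod (i + m.+1 - l) (ord_pos i)).

Definition pconv (R : pzRingType) (m n : nat) (F : 'M[R]_3) (X : 'M[R]_(m, n))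
  : 'M[R]_(m, n) :=
  \matrix_(i < m, j < n)
    \sum_(l1 < 3) \sum_(l2 < 3) F l1 l2 * X (pshift i l1) (pshift j l2).

Definition gauss_filter (R : fieldType) : 'M[R]_3 :=
  \matrix_(i < 3, j < 3)
    ((nth 0%N [:: 1; 2; 1]%N i * nth 0%N [:: 1; 2; 1]%N j)%N%:R / 16%:R).

(* Main.v *)
Require Import Defs.
From HB Require Import structures.
From mathcomp Require Import all_boot all_order all_algebra.
From mathcomp Require Import reals.
From mathcomp Require Import ring lra zify.
Import Order.TTheory GRing.Theory Num.Theory.
Local Open Scope ring_scope.

Lemma L0 (R : realType) (m : nat) (hodd : odd m) (h : nat -> R) :
  (forall k, h (k + m)%N = h k) -> (forall k, h k.+1 = - h k) -> forall k, h k = 0.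
Proof.
move=> hp hs.
have hk : forall k, h k = (-1) ^+ k * h 0%N.
  elim=> [|k IH]; first by rewrite expr0 mul1r.
  by rewrite hs IH exprS mulN1r mulNr.
have h0 : h 0%N = 0.
  have := hp 0%N; rewrite add0n hk -signr_odd hodd expr1 => E.
  lra.
by move=> k; rewrite hk h0 mulr0.
Qed.

Lemma L1 (R : realType) (m : nat) (hodd : odd m) (g : nat -> R) :
  (forall k, g (k + m)%N = g k) ->
  (forall k, g k.+2 + 2 * g k.+1 + g k = 0) -> forall k, g k = 0.
Proof.
move=> hp hs.
have hh := @L0 R m hodd (fun k => g k + g k.+1).
have h0 : forall k, g k + g k.+1 = 0.
  apply: hh => k /=; first by rewrite hp -addSn hp.
  have := hs k; lra.
apply: (@L0 R m hodd g hp) => k; have := h0 k; lra.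
Qed.

Definition gw (R : pzRingType) (l : 'I_3) : R := (nth 0%N [:: 1; 2; 1]%N l)%:R.

Lemma row1D (R : realType) (m : nat) (hm : (0 < m)%N) (hodd : odd m) (y : 'I_m -> R) :
  (forall i, \sum_(l < 3) gw R l * y (pshift i l) = 0) -> forall i, y i = 0.
Proof.
move=> H.
pose g k := y (Ordinal (ltn_pmod k hm)).
have gE : forall a b, (a %% m = b %% m)%N -> g a = g b.
  by move=> a b e; rewrite /g; congr y; apply: val_inj => /=.
have yE : forall i, y i = g i.
  by move=> i; rewrite /g; congr y; apply: val_inj => /=; rewrite modn_small.
suff : forall k, g k = 0 by move=> gz i; rewrite yE gz.
apply: (@L1 R m hodd g).
  by move=> k; apply: gE; rewrite modnDr.
move=> k.
have := H (Ordinal (ltn_pmod k.+1 hm)).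
rewrite !big_ord_recr big_ord0 /= !yE /gw /= add0r mul1r mul1r.
have mE : forall l, (l <= 2)%N -> ((k.+1 %% m + m.+1 - l) %% m = (k.+2 - l) %% m)%N.
  move=> l hl; rewrite -addnBA; last by clear -hl hm; lia.
  rewrite modnDml.
  have -> : (k.+1 + (m.+1 - l) = (k.+2 - l) + m)%N by clear -hl hm; lia.
  by rewrite modnDr.
have gE' : forall l, (l <= 2)%N -> g ((k.+1 %% m + m.+1 - l) %% m)%N = g (k.+2 - l)%N.
  by move=> l hl; apply: gE; rewrite modn_mod mE.
rewrite !gE' // !subSS !subn0.
by move=> ->.
Qed.

Lemma pconv_gE (R : realType) m n (X : 'M[R]_(m, n)) i j :
  pconv (gauss_filter R) X i j =
  16%:R^-1 * \sum_(l1 < 3) gw R l1 * \sum_(l2 < 3) gw R l2 * X (pshift i l1) (pshift j l2).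
Proof.
rewrite mxE mulr_sumr; apply: eq_bigr => l1 _.
rewrite !mulr_sumr; apply: eq_bigr => l2 _.
rewrite mxE natrM /gw; ring.
Qed.

Lemma pconv_lin (R : realType) m n :
  linear_for *:%R (@pconv R m n (gauss_filter R)).
Proof.
move=> a X Y; apply/matrixP => i j.
rewrite pconv_gE mxE [in X in _ = X + _]mxE !pconv_gE.
rewrite mulrCA -mulrDr; congr (_ * _).
rewrite mulr_sumr -big_split; apply: eq_bigr => l1 _ /=.
rewrite mulrCA -!mulrDr; congr (_ * _); rewrite !mulr_sumr -big_split; apply: eq_bigr => l2 _ /=.
rewrite !mxE; ring.
Qed.

HB.instance Definition _ (R : realType) m n :=
  GRing.isLinear.Build R 'M[R]_(m, n) 'M[R]_(m, n) *:%R (@pconv R m n (gauss_filter R))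
    (@pconv_lin R m n).

Lemma pconv_inj0 (R : realType) m n (hm : (0 < m)%N) (hn : (0 < n)%N)
  (om : odd m) (on : odd n) (X : 'M[R]_(m, n)) :
  pconv (gauss_filter R) X = 0 -> X = 0.
Proof.
move=> H.
pose Z i j := \sum_(l2 < 3) gw R l2 * X i (pshift j l2).
have HS : forall i j, \sum_(l1 < 3) gw R l1 * Z (pshift i l1) j = 0.
  move=> i j; have := congr1 (fun M : 'M[R]_(m, n) => M i j) H.
  rewrite pconv_gE mxE => /eqP; rewrite mulf_eq0 invr_eq0 pnatr_eq0 /=.
  by move/eqP.
have HZ : forall i j, Z i j = 0.
  by move=> i j; apply: (@row1D R m hm om (fun i => Z i j)) => i'; apply: HS.
apply/matrixP => i j; rewrite mxE.
by apply: (@row1D R n hn on (fun j => X i j)) => j'; apply: HZ.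
Qed.

Lemma sign_sum (R : realType) m (hm : (0 < m)%N) (em : ~~ odd m) (i : 'I_m) :
  \sum_(l < 3) gw R l * (-1) ^+ (pshift i l) = 0.
Proof.
have sE : forall l : 'I_3, (-1) ^+ (pshift i l) = (-1) ^+ (i + m.+1 - l)%N :> R.
  by move=> l; rewrite /= -signr_odd odd_mod ?signr_odd //; apply/negbTE.
rewrite !big_ord_recr big_ord0 !sE /gw /=.
have e0 : (i + m.+1 - 0 = (i + m - 1).+2)%N by lia.
have e1 : (i + m.+1 - 1 = (i + m - 1).+1)%N by lia.
have e2 : (i + m.+1 - 2 = (i + m - 1))%N by lia.
rewrite e0 e1 e2 !exprS; ring.
Qed.

Lemma even_ex m (hm : (0 < m)%N) : (exists l, (0 < l)%N /\ m = (2 * l)%N) <-> ~~ odd m.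
Proof.
split.
  by case=> l [_ ->]; rewrite oddM.
move=> em; exists m./2; split.
  move: (odd_double_half m); rewrite (negbTE em) add0n => e.
  by rewrite lt0n; apply/eqP => h; move: e hm; rewrite h => <-.
by rewrite -[LHS](odd_double_half m) (negbTE em) add0n -muln2 mulnC.
Qed.

Theorem corollary5 (R : realType) (m n : nat) (hm : (0 < m)%N) (hn : (0 < n)%N) :
  (forall B : 'M[R]_(m, n), exists! X : 'M[R]_(m, n),
      pconv (gauss_filter R) X = B)
  <-> (~ (exists l : nat, (0 < l)%N /\ m = (2 * l)%N) /\
       ~ (exists l : nat, (0 < l)%N /\ n = (2 * l)%N)).
Proof.
rewrite !even_ex //.
split.
  move=> H.
  have Hz : forall X : 'M[R]_(m, n), pconv (gauss_filter R) X = 0 -> X = 0.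
    move=> X hX; have [X0 [_ hu]] := H 0.
    by rewrite -(hu X hX) (hu 0) // linear0.
  have one : forall X : 'M[R]_(m, n), X (Ordinal hm) (Ordinal hn) = 1 -> X = 0 -> False.
    move=> X h1 h0; move: h1; rewrite h0 mxE => /eqP; by rewrite eq_sym oner_eq0.
  split.
    move=> em; pose Xa := \matrix_(i < m, j < n) ((-1) ^+ (val i) : R).
    apply: (one Xa); first by rewrite mxE expr0.
    apply: Hz; apply/matrixP => i j; rewrite pconv_gE mxE.
    rewrite (eq_bigr (fun l1 => (\sum_(l2 < 3) gw R l2) * (gw R l1 * (-1) ^+ (pshift i l1)))).
      by rewrite -mulr_sumr sign_sum // !mulr0.
    move=> l1 _.
    under eq_bigr => l2 _ do rewrite mxE.
    rewrite -mulr_suml; ring.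
  move=> en; pose Xb := \matrix_(i < m, j < n) ((-1) ^+ (val j) : R).
  apply: (one Xb); first by rewrite mxE expr0.
  apply: Hz; apply/matrixP => i j; rewrite pconv_gE mxE.
  rewrite big1 ?mulr0 // => l1 _.
  under eq_bigr => l2 _ do rewrite mxE.
  by rewrite sign_sum // mulr0.
case=> hom hon.
have om : odd m by apply/negPn/negP.
have on : odd n by apply/negPn/negP.
have inj := @pconv_inj0 R m n hm hn om on.
pose M := lin_mx (@pconv R m n (gauss_filter R)).
have rf : row_free M.
  apply: inj_row_free => v hv.
  have : pconv (gauss_filter R) (vec_mx v) = 0 by rewrite -mx_rV_lin hv linear0.
  by move/inj => h; rewrite -(vec_mxK v) h linear0.
have Mu : M \in unitmx by rewrite -row_free_unit.
move=> B; exists (vec_mx (mxvec B *m invmx M)); split.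
  by rewrite -mx_rV_lin mulmxKV // mxvecK.
move=> X' hX'; apply/eqP; rewrite -subr_eq0; apply/eqP; apply: inj.
by rewrite linearB /= hX' -mx_rV_lin mulmxKV // mxvecK subrr.
Qed.
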